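(* Let $F$ be a forest and $\alpha:V(F)\to\mathbb{N}$. Suppose $X_{F^\alpha}$ is not 2-$s$-positive, and that $T$ is the unique connected component of $F^\alpha$ with $X_T$ not 2-$s$-positive. If $T$ is bipartite with bipartition class sizes $(r+2,r)$ for some $r\ge1$, then $F^\alpha$ has no isolated vertices.
   Context: Clan graph $F^\alpha$: replace each vertex $v$ by a clique $K_{\alpha(v)}$ and join all vertices of the cliques of adjacent vertices. $X_H$ is Stanley's chromatic symmetric function of a graph $H$: $X_H=\sum_\kappa\prod_{v}x_{\kappa(v)}$ over proper colorings $\kappa:V(H)\to\mathbb{Z}_{>0}$. A symmetric function $f$ is 2-$s$-positive if $[s_\lambda]f\ge0$ for all partitions $\lambda$ with at most two parts ($s_\lambda$ Schur functions). *)

(* Defs.v *)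
From HB Require Import structures.
From mathcomp Require Import all_boot all_order all_algebra.
From mathcomp Require Import mpoly.
Set Implicit Arguments. Unset Strict Implicit. Unset Printing Implicit Defensive.
Import Order.TTheory GRing.Theory.
Local Open Scope ring_scope.

Definition simple_graph (V : finType) (e : rel V) : Prop :=
  ssrbool.symmetric e /\ ssrbool.irreflexive e.

Definition has_cycle (V : finType) (e : rel V) : Prop :=
  exists s : seq V, [&& (2 < size s)%N, uniq s & cycle e s].

Definition forest (V : finType) (e : rel V) : Prop :=
  simple_graph e /\ ~ has_cycle e.

(* Clan graph F^alpha: vertex v replaced by the clique K_{alpha v};
   vertex set = pairs (v, i) with i < alpha v. *)
Definition clan_vertex (V : finType) (alpha : V -> nat) : finType :=
  {v : V & 'I_(alpha v)}.

Definition clan_rel (V : finType) (e : rel V) (alpha : V -> nat)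
    : rel (clan_vertex alpha) :=
  fun x y => ((tag x == tag y) && (x != y)) || e (tag x) (tag y).
Arguments clan_rel {V} e alpha.

Definition proper (V : finType) (e : rel V) (n : nat) (k : {ffun V -> 'I_n}) :=
  [forall x, forall y, e x y ==> (k x != k y)].

(* Stanley's chromatic symmetric function X_H specialised to n variables
   x_0, ..., x_{n-1} (all other variables set to 0). *)
Definition chrom (V : finType) (e : rel V) (n : nat) : {mpoly int[n]} :=
  \sum_(k : {ffun V -> 'I_n} | proper e k) \prod_(v : V) 'X_(k v).
Arguments chrom {V} e n.

Definition vdm (n : nat) : {mpoly int[n]} :=
  \prod_(i < n) \prod_(j < n | (i < j)%N) ('X_i - 'X_j).

(* Coefficient of the Schur function s_(a,b) (a >= b >= 0) in a symmetric
   polynomial f in n >= 2 variables, via Jacobi's bialternant definition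
   s_lambda = a_{lambda+delta} / a_delta: since
   a_delta * f = sum_lambda [s_lambda]f * a_{lambda+delta}, the coefficient
   [s_lambda]f is the coefficient of x^{lambda+delta} in a_delta * f,
   where delta = (n-1, n-2, ..., 0). *)
Definition schur2_coef (n : nat) (f : {mpoly int[n]}) (a b : nat) : int :=
  (vdm n * f)@_[multinom (nth 0%N [:: a; b] i + (n.-1 - i))%N | i < n].
Arguments schur2_coef {n} f a b.

(* We use #|V| + 2 variables, which is enough to determine
   every Schur coefficient of X_H (homogeneous of degree #|V|). *)
Definition two_s_positive (V : finType) (e : rel V) : Prop :=
  forall a b : nat, (b <= a)%N -> 0 <= schur2_coef (chrom e #|V|.+2) a b.

Definition is_component (V : finType) (e : rel V) (C : {set V}) : Prop :=
  exists x, C = [set y | connect e x y].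

Definition induced (V : finType) (e : rel V) (C : {set V})
    : rel {x : V | x \in C} :=
  fun x y => e (val x) (val y).
Arguments induced {V} e C.

Definition bipartite_sizes (V : finType) (e : rel V) (C : {set V}) (p q : nat)
    : Prop :=
  exists A : {set V}, [/\ A \subset C, #|A| = p, #|C :\: A| = q &
    forall x y, x \in C -> y \in C -> e x y -> ((x \in A) != (y \in A))].

Definition no_isolated (V : finType) (e : rel V) : Prop :=
  forall x, exists y, e x y.
Arguments proper {V} e {n} k.

(* Main.v *)
Require Import Defs.
From HB Require Import structures.
From mathcomp Require Import all_boot all_order all_algebra.
From mathcomp Require Import mpoly.
From mathcomp Require Import zify ring.
Set Implicit Arguments. Unset Strict Implicit. Unset Printing Implicit Defensive.
Import Order.TTheory GRing.Theory Num.Theory.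
Local Open Scope ring_scope.

Section Vdm.
Variable N : nat.
Local Notation PT := ('I_N * 'I_N)%type.
Definition Pp (p : PT) : bool := (p.1 < p.2)%N.
Definition tgt (t : {ffun PT -> bool}) (p : PT) : 'I_N := if t p then p.1 else p.2.
Definition sgnG (p : PT) (b : bool) : int := if Pp p then (if b then 1 else -1) else b%:R.
Definition sgn (t : {ffun PT -> bool}) : int := \prod_p sgnG p (t p).
Definition scG (p : PT) (b : bool) : 'X_{1..N} :=
  if Pp p then U_(if b then p.1 else p.2)%MM else 0%MM.
Definition score (t : {ffun PT -> bool}) : 'X_{1..N} := (\sum_p scG p (t p))%MM.

Lemma vdm_expand : vdm N = \sum_(t : {ffun PT -> bool}) sgn t *: 'X_[score t].
Proof.
transitivity (\prod_(p : PT) \sum_(b : bool) (sgnG p b *: 'X_[scG p b] : {mpoly int[N]})).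
  rewrite /vdm pair_big_dep big_mkcond /=; apply: eq_bigr => p _.
  rewrite big_bool /sgnG /scG /Pp; case: ifP => _ /=.
    by rewrite scale1r scaleN1r.
  by rewrite scale1r scale0r mpolyX0 addr0.
rewrite bigA_distr_bigA /=; apply: eq_bigr => t _.
by rewrite scaler_prod /sgn /score mprodXE.
Qed.

Lemma score_E (t : {ffun PT -> bool}) (j : 'I_N) : score t j = (\sum_(p | Pp p) (tgt t p == j))%N.
Proof.
rewrite /score mnm_sumE [RHS]big_mkcond /=; apply: eq_bigr => p _.
by rewrite /scG /tgt; case: ifP => _; rewrite ?mnm1E ?mnm0E //; case: (t p).
Qed.

Lemma score_E2 (t : {ffun PT -> bool}) (j : 'I_N) :
  score t j = (\sum_(i < N) \sum_(k < N) ((i < k)%N && (tgt t (i, k) == j)))%N.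
Proof.
rewrite score_E big_mkcond pair_big /=; apply: eq_bigr => [[i k]] _ /=.
by rewrite /Pp /=; case: (i < k)%N.
Qed.

Lemma sum_gt (j : 'I_N) : (\sum_(k < N) (j < k)%N)%N = (N.-1 - j)%N.
Proof.
rewrite -(big_mkord xpredT (fun k => nat_of_bool (j < k)%N)).
have hj : (j.+1 <= N)%N by exact: ltn_ord j.
rewrite (@big_cat_nat _ _ _ j.+1 0 N) /= ?leq0n //.
rewrite big1_seq ?add0n; last first.
  by move=> k; rewrite mem_index_iota => /andP[_ hk]; case: ltnP => // hjk; lia.
rewrite big_nat_cond (eq_bigr (fun _ => 1%N)); last first.
  by move=> k; rewrite andbT => /andP[hk _]; rewrite hk.
by rewrite -big_nat_cond sum_nat_const_nat muln1; lia.
Qed.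

Lemma tourn_step (t : {ffun PT -> bool}) (j : 'I_N) :
  (forall k : 'I_N, (j < k)%N -> t (j, k)) ->
  (score t j <= N.-1 - j)%N -> forall i : 'I_N, (i < j)%N -> t (i, j).
Proof.
move=> IH hs i0 hi0; apply/negPn/negP => nt.
have : (N.-1 - j + 1 <= score t j)%N.
  rewrite score_E2 (bigD1 j) //= -sum_gt leq_add //.
    apply: leq_sum => k _; case: ltnP => //= hk.
    by rewrite /tgt IH //= eqxx.
  rewrite (bigD1 i0) /=; last by rewrite neq_ltn hi0.
  rewrite (bigD1 j) //= hi0 /tgt (negbTE nt) eqxx /=.
  by rewrite -addnA leq_addr.
by lia.
Qed.

Lemma tourn (t : {ffun PT -> bool}) :
  (forall j : 'I_N, (2 <= j)%N -> (score t j <= N.-1 - j)%N) ->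
  forall p : 'I_N * 'I_N, Pp p -> (2 <= p.2)%N -> t p.
Proof.
move=> hs.
suff H : forall d (j : 'I_N), (N - j <= d)%N -> (2 <= j)%N ->
    forall i : 'I_N, (i < j)%N -> t (i, j).
  by move=> [i j] /= hp hj; apply: (H N) => //; lia.
elim=> [|d IH] j hd h2.
  by have := ltn_ord j; lia.
apply: tourn_step; last exact: hs.
move=> k hk; apply: IH => //; first by have := ltn_ord k; lia.
by lia.
Qed.

End Vdm.
Section Tw.
Variable n : nat.
Local Notation N := n.+2.
Local Notation PT := ('I_N * 'I_N)%type.
Definition o0 : 'I_N := ord0.
Definition o1 : 'I_N := @Ordinal N 1 isT.
Definition p0 : PT := (o0, o1).
Definition t1 : {ffun PT -> bool} := [ffun => true].
Definition t2 : {ffun PT -> bool} := [ffun p => p != p0].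

Lemma t21 : t2 != t1.
Proof. by apply/eqP => /ffunP /(_ p0); rewrite !ffunE eqxx. Qed.

Lemma sgn_t1 : sgn t1 = 1.
Proof. by apply: big1 => p _; rewrite ffunE /sgnG; case: ifP. Qed.

Lemma sgn_t2 : sgn t2 = -1.
Proof.
rewrite /sgn (bigD1 p0) //= big1 ?mulr1; first by rewrite ffunE eqxx.
by move=> p hp; rewrite ffunE hp /sgnG; case: ifP.
Qed.

Lemma score_t1 (j : 'I_N) : score t1 j = (N.-1 - j)%N.
Proof.
rewrite score_E2 (bigD1 j) //= [X in (_ + X)%N]big1 ?addn0.
  transitivity (\sum_(k < N) (j < k)%N)%N; last exact: sum_gt.
  by apply: eq_bigr => k _; rewrite /tgt ffunE eqxx andbT.
move=> i hi; apply: big1 => k _; rewrite /tgt ffunE /=.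
by rewrite (negbTE hi) andbF.
Qed.

Lemma score_t2 (j : 'I_N) :
  (score t2 j + (o0 == j) = score t1 j + (o1 == j))%N.
Proof.
rewrite !score_E (bigD1 p0) //= (bigD1 p0 (P := @Pp N)) //=.
rewrite /tgt !ffunE eqxx /=.
set S2 := (\sum_(i | _) _)%N; set S1 := (\sum_(i | _) _)%N.
have -> : S2 = S1.
  by apply: eq_bigr => p /andP[_ hp]; rewrite !ffunE hp.
by rewrite /p0 /=; lia.
Qed.

Lemma sgn0 (t : {ffun PT -> bool}) p : ~~ Pp p -> ~~ t p -> sgn t = 0.
Proof.
move=> hp ht; rewrite /sgn (bigD1 p) //= /sgnG (negbTE hp) (negbTE ht).
by rewrite mul0r.
Qed.

Lemma t12 (t : {ffun PT -> bool}) :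
  (forall p, ~~ Pp p -> t p) -> (forall p, Pp p -> (2 <= p.2)%N -> t p) ->
  t = t1 \/ t = t2.
Proof.
move=> h1 h2.
have hp : forall p : PT, p != p0 -> t p.
  move=> [i k] hik; case: (boolP (Pp (i, k))) => hP; last exact: h1.
  apply: h2 => //=; move: hP; rewrite /Pp /= => hP.
  case: (ltnP 1 k) => // hk; case/negP: hik; rewrite /p0 /o0 /o1.
  apply/eqP; congr pair; apply: val_inj => /=; lia.
case: (boolP (t p0)) => h0; [left|right]; apply/ffunP => p; rewrite !ffunE.
  by case: (eqVneq p p0) => [->|/hp].
by case: (eqVneq p p0) => [->|/hp]; [apply/negbTE|].
Qed.
End Tw.
Section SchurA.
Variables (W : finType) (e : rel W).
Local Notation n := #|W|.
Local Notation N := n.+2.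
Local Notation PT := ('I_N * 'I_N)%type.

Definition content (k : {ffun W -> 'I_N}) : 'X_{1..N} := (\sum_v U_(k v))%MM.

Lemma content_E k (j : 'I_N) : content k j = #|[set v | k v == j]|.
Proof.
rewrite /content mnm_sumE cardsE -sum1_card [RHS]big_mkcond /=.
apply: eq_bigr => v _; rewrite mnm1E unfold_in /=.
by rewrite -[eqn _ _]/(k v == j); case: (k v == j).
Qed.

Lemma chrom_E : chrom e N = \sum_(k | Defs.proper e k) 'X_[content k].
Proof. by apply: eq_bigr => k _; rewrite /content mprodXE. Qed.

Definition mlam (a b : nat) : 'X_{1..N} :=
  [multinom (nth 0%N [:: a; b] i + (N.-1 - i))%N | i < N].

Lemma sum_t (c : 'X_{1..N}) a b :
  \sum_(t : {ffun PT -> bool}) sgn t * ((score t + c)%MM == mlam a b)%:R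
  = ((score (t1 n) + c)%MM == mlam a b)%:R - ((score (t2 n) + c)%MM == mlam a b)%:R :> int.
Proof.
rewrite (bigD1 (t1 n)) //= (bigD1 (t2 n)) /=; last by rewrite t21.
rewrite sgn_t1 sgn_t2 mul1r mulN1r big1 ?addr0 //.
move=> t /andP[ht1 ht2].
case: (boolP ((score t + c)%MM == mlam a b)) => hs; last by rewrite mulr0.
case: (boolP [forall p, ~~ Pp p ==> t p]) => hP; last first.
  move: hP; rewrite negb_forall => /existsP[p]; rewrite negb_imply => /andP[hp hq].
  by rewrite (sgn0 hp hq) mul0r.
have h1 : forall p, ~~ Pp p -> t p by move=> p hp; move/forallP: hP => /(_ p); rewrite hp.
have h3 : forall j : 'I_N, (2 <= j)%N -> (score t j <= N.-1 - j)%N.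
  move=> j hj; move/eqP/mnmP: hs => /(_ j); rewrite mnmDE mnmE => hs.
  have e0 : nth 0%N [:: a; b] j = 0%N.
    by case: j hj hs => [[|[|j]]] //=; rewrite nth_nil.
  rewrite e0 in hs; lia.
by case: (t12 h1 (tourn h3)) => E; [rewrite E eqxx in ht1|rewrite E eqxx in ht2].
Qed.

Lemma schur_A0 a b : schur2_coef (chrom e N) a b =
  \sum_(k | Defs.proper e k)
    (((score (t1 n) + content k)%MM == mlam a b)%:R
     - ((score (t2 n) + content k)%MM == mlam a b)%:R).
Proof.
rewrite /schur2_coef -/(mlam a b) vdm_expand chrom_E mulr_suml raddf_sum /=.
under eq_bigr => t _ do rewrite mulr_sumr raddf_sum /=.
rewrite exchange_big /=; apply: eq_bigr => k _.
rewrite -sum_t; apply: eq_bigr => t _.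
by rewrite -scalerAl -mpolyXD mcoeffZ mcoeffX.
Qed.

Lemma sum_ind (I : finType) (P A : pred I) :
  \sum_(k | P k) (A k)%:R = (#|[set k | P k && A k]|)%:R :> int.
Proof.
rewrite -natr_sum cardsE -sum1_card big_mkcond [in RHS]big_mkcond /=.
congr (_%:R); apply: eq_bigr => k _; rewrite unfold_in /=.
by case: (P k); case: (A k).
Qed.

Definition properb (k : {ffun W -> bool}) :=
  [forall x, forall y, e x y ==> (k x != k y)].
Definition cntb (j : nat) :=
  #|[set k : {ffun W -> bool} | properb k && (#|[set v | k v]| == j)]|.

Lemma o0E (j : 'I_N) : (o0 n == j) = (val j == 0%N).
Proof. by rewrite eq_sym. Qed.
Lemma o1E (j : 'I_N) : (o1 n == j) = (val j == 1%N).
Proof. by rewrite eq_sym. Qed.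

Lemma condA (c : 'X_{1..N}) a b :
  ((score (t1 n) + c)%MM == mlam a b) =
  [forall j, c j == nth 0%N [:: a; b] j].
Proof.
apply/eqP/forallP => [/mnmP h j|h]; [move: (h j)|apply/mnmP => j; move: (h j)];
  rewrite mnmDE mnmE score_t1 => /eqP; lia.
Qed.

Lemma condB (c : 'X_{1..N}) a b :
  ((score (t2 n) + c)%MM == mlam a b) =
  (0 < b)%N && [forall j, c j == nth 0%N [:: a.+1; b.-1] j].
Proof.
have key : forall j : 'I_N,
  (score (t2 n) j = if val j == 0%N then n else if val j == 1%N then n.+1 else N.-1 - j)%N.
  move=> j; have := score_t2 j; rewrite score_t1 o0E o1E.
  by case: j => [[|[|j]] hj] /=; lia.
apply/eqP/andP => [/mnmP h|[hb h]].
  split.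
    by move: (h (o1 n)); rewrite mnmDE mnmE key /=; lia.
  apply/forallP => j; move: (h j); rewrite mnmDE mnmE key.
  by case: j => [[|[|j]] hj] /=; rewrite ?nth_nil; lia.
apply/mnmP => j; move/forallP: h => /(_ j); rewrite mnmDE mnmE key.
by case: j => [[|[|j]] hj] /=; rewrite ?nth_nil; lia.
Qed.

Definition phib (kb : {ffun W -> bool}) : {ffun W -> 'I_N} :=
  [ffun v => if kb v then o0 n else o1 n].

Lemma phib_inj : injective phib.
Proof.
move=> k1 k2 /ffunP h; apply/ffunP => v; move: (h v); rewrite !ffunE.
by case: (k1 v); case: (k2 v).
Qed.

Lemma content_phib kb (j : 'I_N) :
  content (phib kb) j =
  if val j == 0%N then #|[set v | kb v]|
  else if val j == 1%N then #|[set v | ~~ kb v]| else 0%N.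
Proof.
rewrite content_E.
case: j => [[|[|j]] hj] /=.
- by apply: eq_card => v; rewrite !inE ffunE; case: (kb v).
- by apply: eq_card => v; rewrite !inE ffunE; case: (kb v).
- apply/eqP; rewrite cards_eq0; apply/eqP/setP => v; rewrite !inE ffunE.
  by case: (kb v).
Qed.

Lemma TR a' b' :
  #|[set k : {ffun W -> 'I_N} | Defs.proper e k &&
      [forall j, content k j == nth 0%N [:: a'; b'] j]]|
  = if (a' + b')%N == n then cntb a' else 0%N.
Proof.
set S := [set k | _].
have hS : S = phib @: [set kb | properb kb && (#|[set v | kb v]| == a')
                                && (#|[set v | ~~ kb v]| == b')].
  apply/setP => k; rewrite inE; apply/idP/idP.
    move=> /andP[hp /forallP hc].
    have h01 : forall v, (val (k v) < 2)%N.
      move=> v; case: ltnP => // h2; move: (hc (k v)).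
      rewrite content_E.
      have -> : nth 0%N [:: a'; b'] (k v) = 0%N.
        by case: (k v) h2 => [[|[|j]] hj] //= _; rewrite nth_nil.
      rewrite cards_eq0 => /eqP/setP/(_ v).
      by rewrite !inE eqxx.
    set kb := [ffun v => k v == o0 n].
    have hk : k = phib kb.
      apply/ffunP => v; rewrite /kb !ffunE; case: eqP => [->//|/eqP h].
      apply: val_inj => /=; move: (h01 v) h; rewrite eq_sym o0E.
      by case: (k v) => [[|[|j]] hj].
    rewrite hk; apply: imset_f; rewrite inE.
    move: (hc (o0 n)) (hc (o1 n)); rewrite hk !content_phib /= => -> ->.
    rewrite !andbT.
    apply/forallP => x; apply/forallP => y; apply/implyP => hxy.
    move/forallP: hp => /(_ x) /forallP /(_ y) /implyP /(_ hxy).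
    rewrite hk /kb !ffunE.
    by case: (k x == o0 n); case: (k y == o0 n).
  case/imsetP => kb; rewrite inE => /andP[/andP[hp ha] hb] ->.
  apply/andP; split.
    apply/forallP => x; apply/forallP => y; apply/implyP => hxy.
    move/forallP: hp => /(_ x) /forallP /(_ y) /implyP /(_ hxy).
    rewrite !ffunE; by case: (kb x); case: (kb y).
  apply/forallP => j; rewrite content_phib.
  by case: j => [[|[|j]] hj] //=; rewrite nth_nil.
rewrite hS card_imset; last exact: phib_inj.
have hC : forall kb : {ffun W -> bool},
    (#|[set v | kb v]| + #|[set v | ~~ kb v]|)%N = n.
  move=> kb; rewrite -(cardsC [set v | kb v]); congr (_ + _)%N.
  by apply: eq_card => v; rewrite !inE.
case: eqP => hab.
  apply: eq_card => kb; rewrite !inE; case: (properb kb) => //=.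
  have := hC kb; move: (#|[set v | kb v]|) (#|[set v | ~~ kb v]|) => x y hxy.
  apply/idP/idP => [/andP[]//| /eqP hx]; rewrite hx eqxx /=; apply/eqP; lia.
apply/eqP; rewrite cards_eq0; apply/eqP/setP => kb; rewrite !inE.
apply/negbTE; apply/negP => /andP[/andP[_ /eqP ha] /eqP hb].
by have := hC kb; rewrite ha hb.
Qed.

Lemma schur_A a b : schur2_coef (chrom e N) a b =
  (if (a + b)%N == n then cntb a else 0%N)%:R
  - (if (0 < b)%N && ((a + b)%N == n) then cntb a.+1 else 0%N)%:R.
Proof.
rewrite schur_A0 sumrB !sum_ind.
under eq_finset => k do rewrite condA.
rewrite TR; congr (_ - _%:R).
under eq_finset => k do rewrite condB.
case: b => [|b] /=.
  by apply/eqP; rewrite cards_eq0; apply/eqP/setP => k; rewrite !inE andbF.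
have -> : (a + b.+1)%N = (a.+1 + b)%N by lia.
by rewrite -TR.
Qed.
End SchurA.

Section GoodSec.
Definition Good (h : {poly int}) (n : nat) : Prop :=
  [/\ forall i, (n < i)%N -> h`_i = 0,
      forall i j, (i + j = n)%N -> h`_i = h`_j &
      forall i j, (i + j = n)%N -> (j <= i)%N -> h`_i.+1 <= h`_i].

Lemma Good0 n : Good 0 n.
Proof. by split => *; rewrite ?coef0. Qed.

Lemma GoodX h n q : Good h n -> Good (h * 'X^q) (n + 2 * q).
Proof.
case=> hd hs hm; split.
- move=> i hi; rewrite coefMXn; case: ifP => // _; apply: hd; lia.
- move=> i j hij; rewrite !coefMXn.
  case: (ltnP i q) => hi; case: (ltnP j q) => hj //.
  + by rewrite hd //; lia.
  + by rewrite hd //; lia.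
  + by apply: hs; lia.
- move=> i j hij hji; rewrite !coefMXn.
  have hi : (q <= i)%N by lia.
  have hi1 : (q <= i.+1)%N by lia.
  rewrite [(i < q)%N]ltnNge hi [(i.+1 < q)%N]ltnNge hi1 /=.
  have -> : (i.+1 - q = (i - q).+1)%N by lia.
  case: (ltnP j q) => hj.
    by rewrite !hd //; lia.
  by apply: (hm _ (j - q)%N); lia.
Qed.

Lemma Good2 h n : Good h n -> Good (h *+ 2) n.
Proof.
case=> hd hs hm; split.
- by move=> i hi; rewrite coefMn hd.
- by move=> i j hij; rewrite !coefMn (hs _ _ hij).
- by move=> i j hij hji; rewrite !coefMn lerMn2r /= (hm _ _ hij hji).
Qed.

Lemma coef1X (h : {poly int}) i :
  (h * (1 + 'X))`_i = h`_i + (if i == 0%N then 0 else h`_i.-1).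
Proof. by rewrite mulrDr mulr1 coefD coefMX. Qed.

Lemma Good1X h n : Good h n -> Good (h * (1 + 'X)) n.+1.
Proof.
case=> hd hs hm; split.
- move=> i hi; rewrite coef1X !hd; last by lia.
  + by case: eqP.
  + by lia.
- move=> i j hij; rewrite !coef1X.
  case: i hij => [|i] hij; case: j hij => [|j] hij /=.
  + by lia.
  + by rewrite (hd j.+1) ?add0r ?addr0; [apply: hs|]; lia.
  + by rewrite (hd i.+1) ?add0r ?addr0; [apply: hs|]; lia.
  + by rewrite (hs i.+1 j) ?(hs i j.+1) 1?addrC //; lia.
- move=> i j hij hji; rewrite !coef1X /=.
  case: i hij hji => [|i] hij hji; first by lia.
  rewrite /=; apply: lerD.
    case: j hij hji => [|j] hij hji.
      by rewrite !hd //; lia.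
    by apply: (hm _ j); lia.
  case: (ltnP j i.+1) => hj.
    by apply: (hm _ j); lia.
  by rewrite (hs i.+1 i) //; lia.
Qed.

Lemma coefXX (p q i : nat) : (('X^p + 'X^q : {poly int})`_i) = (i == p)%:R + (i == q)%:R.
Proof. by rewrite coefD !coefXn. Qed.

Lemma Good_pq h n p q :
  Good h n -> (p = q \/ p = q.+1 \/ q = p.+1) ->
  Good (h * ('X^p + 'X^q)) (n + p + q).
Proof.
move=> hG [->|[->|->]].
- have -> : (n + q + q = n + 2 * q)%N by lia.
  have -> : h * ('X^q + 'X^q) = (h * 'X^q) *+ 2 by rewrite -mulr2n mulrnAr.
  exact/Good2/GoodX.
- have -> : (n + q.+1 + q = (n + 2 * q).+1)%N by lia.
  have -> : h * ('X^(q.+1) + 'X^q) = h * 'X^q * (1 + 'X).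
    by rewrite exprSr; ring.
  exact/Good1X/GoodX.
- have -> : (n + p + p.+1 = (n + 2 * p).+1)%N by lia.
  have -> : h * ('X^p + 'X^(p.+1)) = h * 'X^p * (1 + 'X).
    by rewrite exprSr; ring.
  exact/Good1X/GoodX.
Qed.
End GoodSec.

Section Colorings.
Variables (T : finType) (e : rel T).
Hypothesis esym : ssrbool.symmetric e.

Definition colU (U : {set T}) (k : {ffun T -> bool}) : bool :=
  [forall x, (x \notin U) ==> ~~ k x] &&
  [forall x, forall y, [&& x \in U, y \in U & e x y] ==> (k x != k y)].
Definition sz (U : {set T}) (k : {ffun T -> bool}) := #|[set x in U | k x]|.
Definition gU (U : {set T}) : {poly int} := \sum_(k | colU U k) 'X^(sz U k).
Definition ccount (U : {set T}) j := #|[set k | colU U k && (sz U k == j)]|.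

Lemma coef_gU (U : {set T}) j : (gU U)`_j = (ccount U j)%:R.
Proof.
rewrite /gU coef_sum; under eq_bigr => k _ do rewrite coefXn.
rewrite sum_ind /ccount; congr (_%:R); apply: eq_card => k; rewrite !inE.
by rewrite eq_sym.
Qed.

Lemma colU_out (U : {set T}) (k : {ffun T -> bool}) x : colU U k -> x \notin U -> k x = false.
Proof. by case/andP => /forallP /(_ x) /implyP h _ /h /negbTE. Qed.

Lemma colU_edge (U : {set T}) (k : {ffun T -> bool}) x y : colU U k -> x \in U -> y \in U -> e x y -> k x != k y.
Proof.
case/andP => _ /forallP /(_ x) /forallP /(_ y) /implyP h hx hy hxy.
by apply: h; rewrite hx hy hxy.
Qed.

Lemma colUP (U : {set T}) (k : {ffun T -> bool}) : (forall x, x \notin U -> k x = false) ->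
  (forall x y, x \in U -> y \in U -> e x y -> k x != k y) -> colU U k.
Proof.
move=> h1 h2; apply/andP; split.
  by apply/forallP => x; apply/implyP => /h1 ->.
apply/forallP => x; apply/forallP => y; apply/implyP => /and3P[hx hy hxy].
exact: h2.
Qed.

Definition restr (A : {set T}) (k : {ffun T -> bool}) : {ffun T -> bool} :=
  [ffun x => (x \in A) && k x].
Definition merge (p : {ffun T -> bool} * {ffun T -> bool}) : {ffun T -> bool} :=
  [ffun x => p.1 x || p.2 x].

Lemma sz_split (U1 U2 : {set T}) k : [disjoint U1 & U2] ->
  sz (U1 :|: U2) k = (sz U1 k + sz U2 k)%N.
Proof.
move=> hd; rewrite /sz -cardsUI.
have -> : [set x in U1 | k x] :&: [set x in U2 | k x] = set0.
  apply/setP => x; rewrite !inE; case: (boolP (x \in U1)) => //= h1.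
  by rewrite (disjointFr hd h1) andbF.
rewrite cards0 addn0; apply: eq_card => x; rewrite !inE.
by rewrite andb_orl.
Qed.

Lemma sz_ext (U : {set T}) (k k' : {ffun T -> bool}) : (forall x, x \in U -> k x = k' x) -> sz U k = sz U k'.
Proof.
move=> h; apply: eq_card => x; rewrite !inE; case: (boolP (x \in U)) => //= hx.
by rewrite h.
Qed.

Lemma gU_union (U1 U2 : {set T}) : [disjoint U1 & U2] ->
  (forall x y, x \in U1 -> y \in U2 -> ~~ e x y) ->
  gU (U1 :|: U2) = gU U1 * gU U2.
Proof.
move=> hd hne.
have hne' : forall x y, x \in U2 -> y \in U1 -> ~~ e x y.
  by move=> x y hx hy; rewrite esym; apply: hne.
rewrite /gU [RHS]mulr_suml.
rewrite [RHS](eq_bigr (fun k1 => \sum_(k2 | colU U2 k2) 'X^(sz U1 k1) * 'X^(sz U2 k2))); last first.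
  by move=> k1 _; rewrite mulr_sumr.
rewrite pair_big_dep /=.
rewrite (reindex_onto merge (fun k => (restr U1 k, restr U2 k))); last first.
  move=> k hk; apply/ffunP => x; rewrite !ffunE /=.
  case: (boolP (x \in U1)) => h1; case: (boolP (x \in U2)) => h2;
    rewrite ?andTb ?andFb ?orbF ?orFb ?orbb //.
  by rewrite (colU_out hk) // inE negb_or h1 h2.
apply: eq_big => [[k1 k2]|[k1 k2] /andP[_ /eqP[h1 h2]]] /=; last first.
  rewrite -exprD sz_split //; congr ('X^(_ + _)).
    apply: (etrans _ (congr1 (sz U1) h1)); apply: sz_ext => x hx.
    by rewrite [in RHS]ffunE hx.
  apply: (etrans _ (congr1 (sz U2) h2)); apply: sz_ext => x hx.
  by rewrite [in RHS]ffunE hx.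
apply/andP/andP => [[hc /eqP [h1 h2]]|[c1 c2]].
  split.
    rewrite -h1; apply: colUP => [x hx|x y hx hy hxy]; first by rewrite ffunE (negbTE hx).
    rewrite [restr _ _ x]ffunE [restr _ _ y]ffunE hx hy /=.
    by apply: colU_edge hc _ _ hxy; rewrite inE ?hx ?hy.
  rewrite -h2; apply: colUP => [x hx|x y hx hy hxy]; first by rewrite ffunE (negbTE hx).
  rewrite [restr _ _ x]ffunE [restr _ _ y]ffunE hx hy /=.
  by apply: colU_edge hc _ _ hxy; rewrite inE ?hx ?hy orbT.
have o1 : forall x, x \notin U1 -> k1 x = false by move=> x; apply: colU_out.
have o2 : forall x, x \notin U2 -> k2 x = false by move=> x; apply: colU_out.
split.
  apply: colUP => [x|x y].
    rewrite inE negb_or => /andP[h1 h2]; by rewrite ffunE /= o1 ?o2.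
  rewrite !inE !ffunE /= => /orP[hx|hx] /orP[hy|hy] hxy.
  - rewrite (o2 x) ?(o2 y) ?orbF; first exact: colU_edge c1 hx hy hxy.
    + by rewrite (disjointFr hd hy).
    + by rewrite (disjointFr hd hx).
  - by case/negP: (hne x y hx hy).
  - by case/negP: (hne' x y hx hy).
  - rewrite (o1 x) ?(o1 y) /=; first exact: colU_edge c2 hx hy hxy.
    + by rewrite (disjointFl hd hy).
    + by rewrite (disjointFl hd hx).
apply/eqP; congr pair; apply/ffunP => x; rewrite !ffunE /=.
  case: (boolP (x \in U1)) => hx /=; last by rewrite o1.
  by rewrite (o2 x) ?orbF // (disjointFr hd hx).
case: (boolP (x \in U2)) => hx /=; last by rewrite o2.
by rewrite (o1 x) // (disjointFl hd hx).
Qed.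

Definition comp x0 : {set T} := [set y | connect e x0 y].

Lemma comp0 x0 : x0 \in comp x0.
Proof. by rewrite inE connect0. Qed.

Lemma comp_closed x0 y z : y \in comp x0 -> e y z -> z \in comp x0.
Proof.
by rewrite !inE => hy hyz; apply: connect_trans hy (connect1 hyz).
Qed.

Lemma comp_closed' x0 y z : z \in comp x0 -> e y z -> y \in comp x0.
Proof. by move=> hz hyz; apply: comp_closed hz _; rewrite esym. Qed.

Definition flip (K : {set T}) (k : {ffun T -> bool}) : {ffun T -> bool} :=
  [ffun x => (x \in K) && ~~ k x].

Lemma comp_two x0 (k0 k1 : {ffun T -> bool}) :
  colU (comp x0) k0 -> colU (comp x0) k1 -> k1 = k0 \/ k1 = flip (comp x0) k0.
Proof.
move=> hk0 hk1; set s := (k1 x0 == k0 x0).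
have hcl : closed e [pred y | connect e x0 y ==> ((k1 y == k0 y) == s)].
  move=> y z hyz; rewrite !inE /=.
  case: (boolP (connect e x0 y)) => hy.
    have hz : connect e x0 z := connect_trans hy (connect1 hyz).
    rewrite hz /=.
    have hy' : y \in comp x0 by rewrite inE.
    have hz' : z \in comp x0 by rewrite inE.
    have := colU_edge hk0 hy' hz' hyz; have := colU_edge hk1 hy' hz' hyz.
    by case: (k0 y); case: (k0 z); case: (k1 y); case: (k1 z).
  have hz : ~~ connect e x0 z.
    apply/negP => hz; case/negP: hy; apply: connect_trans hz (connect1 _).
    by rewrite esym.
  by rewrite (negbTE hz).
have H : forall y, y \in comp x0 -> (k1 y == k0 y) == s.
  move=> y; rewrite inE => hc; have := closed_connect hcl hc.
  by rewrite !inE /= hc connect0 /= eqxx /= => <-.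
have hout : forall k, colU (comp x0) k -> forall y, y \notin (comp x0) -> k y = false.
  by move=> k hk y; apply: colU_out.
case hs : s; [left|right]; apply/ffunP => y; rewrite ?ffunE;
  (case: (boolP (y \in (comp x0))) => hy; last by rewrite !hout).
  by move: (H y hy); rewrite hs => /eqP/eqP.
by move: (H y hy); rewrite hs /=; case: (k1 y); case: (k0 y).
Qed.

Lemma sz_flip (K : {set T}) k : (sz K k + sz K (flip K k))%N = #|K|.
Proof.
rewrite -(cardsID [set x | k x] K); congr (_ + _)%N; apply: eq_card => x;
  rewrite !inE ?ffunE //.
by rewrite andbA andbb andbC.
Qed.

Lemma gU_comp x0 k0 : colU (comp x0) k0 ->
  gU (comp x0) = 'X^(sz (comp x0) k0) + 'X^(#|comp x0| - sz (comp x0) k0).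
Proof.
move=> hk0; set K := comp x0.
have hf : colU K (flip K k0).
  apply: colUP => [x hx|x y hx hy hxy]; first by rewrite ffunE (negbTE hx).
  rewrite !ffunE hx hy /=; have := colU_edge hk0 hx hy hxy.
  by case: (k0 x); case: (k0 y).
have hne : flip K k0 != k0.
  apply/eqP => /ffunP /(_ x0); rewrite ffunE comp0 /=.
  by case: (k0 x0).
rewrite /gU (bigD1 k0) // (bigD1 (flip K k0)) /=; last by rewrite hf hne.
rewrite big1 ?addr0.
  by rewrite -(sz_flip K k0) addKn.
move=> k /andP[/andP[hk h1] h2].
by case: (comp_two hk0 hk) => E; [move: h1|move: h2]; rewrite E eqxx.
Qed.

Lemma comp_iso x : (forall y, ~~ e x y) -> comp x = [set x].
Proof.
move=> h; apply/setP => y; rewrite !inE; apply/idP/idP => [/connectP[p hp ->]|/eqP->].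
  case: p hp => //= z p /andP[hxz _].
  by rewrite (negbTE (h z)) in hxz.
exact: connect0.
Qed.

Lemma gU_iso x : (forall y, ~~ e x y) -> gU [set x] = 1 + 'X.
Proof.
move=> h; rewrite -comp_iso // (@gU_comp x [ffun => false]).
  rewrite comp_iso // cards1.
  have -> : sz [set x] [ffun => false] = 0%N.
    by apply/eqP; rewrite cards_eq0; apply/eqP/setP => y; rewrite !inE ffunE andbF.
  by rewrite expr0 expr1.
apply: colUP => [y hy|y z]; first by rewrite ffunE.
rewrite comp_iso // !inE => /eqP -> /eqP ->.
by rewrite (negbTE (h x)).
Qed.

End Colorings.

Section Bridge.
Variables (T : finType) (e : rel T).

Lemma ccount_setT j : cntb e j = ccount e [set: T] j.
Proof.
apply: eq_card => k; rewrite !inE; congr (_ && _); last first.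
  by rewrite /sz; congr (_ == _); apply: eq_card => x; rewrite !inE.
apply/idP/idP => h.
  apply: colUP => [x|x y _ _ hxy]; first by rewrite inE.
  by move/forallP: h => /(_ x) /forallP /(_ y) /implyP; apply.
apply/forallP => x; apply/forallP => y; apply/implyP => hxy.
by apply: colU_edge h _ _ hxy; rewrite inE.
Qed.

Variable U : {set T}.
Local Notation W := {x : T | x \in U}.

Definition ext (kb : {ffun W -> bool}) : {ffun T -> bool} :=
  [ffun x => if (insub x : option W) is Some w then kb w else false].

Lemma ext_val kb (w : W) : ext kb (val w) = kb w.
Proof. by rewrite ffunE valK. Qed.

Lemma ext_out kb x : x \notin U -> ext kb x = false.
Proof. by move=> hx; rewrite ffunE insubF //; apply/negbTE. Qed.

Lemma ext_inj : injective ext.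
Proof.
by move=> k1 k2 h; apply/ffunP => w; rewrite -!ext_val h.
Qed.

Lemma sz_extb kb : sz U (ext kb) = #|[set v | kb v]|.
Proof.
rewrite /sz -(card_imset _ val_inj); apply: eq_card => x; rewrite !inE.
apply/andP/imsetP => [[hx hk]|[w]].
  by exists (Sub x hx); rewrite ?inE -?ext_val ?SubK.
by rewrite inE => hw ->; rewrite ext_val (valP w).
Qed.

Lemma ccount_induced j : cntb (induced e U) j = ccount e U j.
Proof.
rewrite /ccount.
have -> : [set k | colU e U k && (sz U k == j)] =
    ext @: [set kb | properb (induced e U) kb && (#|[set v | kb v]| == j)].
  apply/setP => k; rewrite inE; apply/idP/imsetP.
    case/andP => hk hs.
    have hkk : k = ext [ffun w : W => k (val w)].
      apply/ffunP => x; case: (boolP (x \in U)) => hx.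
        by rewrite -(SubK W hx) ext_val ffunE.
      by rewrite ext_out // (colU_out hk).
    exists [ffun w : W => k (val w)]; last exact: hkk.
    rewrite inE -sz_extb -hkk hs andbT.
    apply/forallP => w1; apply/forallP => w2; apply/implyP => h12.
    by rewrite !ffunE; apply: colU_edge hk (valP w1) (valP w2) h12.
  case=> kb; rewrite inE => /andP[hp hs] ->.
  rewrite sz_extb hs andbT.
  apply: colUP => [x hx|x y hx hy hxy]; first by rewrite ext_out.
  rewrite -(SubK W hx) -(SubK W hy) !ext_val.
  move/forallP: hp => /(_ (Sub x hx)) /forallP /(_ (Sub y hy)) /implyP; apply.
  by rewrite /induced !SubK.
by rewrite card_imset //; exact: ext_inj.
Qed.
End Bridge.

Lemma tsp_iff (W : finType) (e : rel W) : two_s_positive e <->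
  (forall a b, (b <= a)%N -> (a + b)%N = #|W| -> (0 < b)%N ->
     (cntb e a.+1 <= cntb e a)%N).
Proof.
rewrite /two_s_positive; split => h a b hba.
  move=> hab hb; have := h a b hba.
  by rewrite schur_A hab eqxx hb /= subr_ge0 ler_nat.
rewrite schur_A; case: eqP => hab /=; last by rewrite andbF subrr.
case: (posnP b) => [|hb]; first by rewrite /= subr0 ler0n.
by rewrite /= subr_ge0 ler_nat; exact: (h a b hba hab hb).
Qed.

Lemma gU0 (T : finType) (e : rel T) : gU e set0 = 1.
Proof.
have hc : colU e set0 [ffun => false].
  by apply: colUP => [x _|x y]; rewrite ?ffunE ?inE.
rewrite /gU (bigD1 [ffun => false]) //= big1 ?addr0.
  have -> : sz (set0 : {set T}) [ffun => false] = 0%N.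
    by apply/eqP; rewrite cards_eq0; apply/eqP/setP => x; rewrite !inE.
  by rewrite expr0.
move=> k /andP[hk hne]; case/eqP: hne; apply/ffunP => x.
by rewrite ffunE (colU_out hk) // inE.
Qed.

Lemma Good_h0 r : Good ((1 + 'X) * ('X^(r.+2) + 'X^r)) (2 * r + 3).
Proof.
have hE : forall i, ((1 + 'X) * ('X^(r.+2) + 'X^r) : {poly int})`_i =
    ((i == r.+2) + (i == r) + (i == r.+3) + (i == r.+1))%N%:R.
  move=> i.
  have -> : ((1 + 'X) * ('X^(r.+2) + 'X^r) : {poly int}) =
     'X^(r.+2) + 'X^r + 'X^(r.+3) + 'X^(r.+1).
    by rewrite !exprS; ring.
  by rewrite !coefD !coefXn !natrD.
split.
- by move=> i hi; rewrite hE; apply/eqP; rewrite pnatr_eq0; apply/eqP; lia.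
- by move=> i j hij; rewrite !hE; congr (_%:R); lia.
- by move=> i j hij hji; rewrite !hE ler_nat; lia.
Qed.

Section Main.
Variables (T : finType) (e : rel T).
Hypothesis esym : ssrbool.symmetric e.

Lemma natr_inj_int (m n : nat) : (m%:R : int) = n%:R -> m = n.
Proof. by move/eqP; rewrite eqr_nat => /eqP. Qed.

Lemma Good_comp h n y :
  two_s_positive (induced e (comp e y)) -> Good h n ->
  Good (h * gU e (comp e y)) (n + #|comp e y|).
Proof.
move=> htsp hG; set K := comp e y.
case: (pickP (colU e K)) => [k0 hk0|hno]; last first.
  have -> : gU e K = 0 by rewrite /gU big_pred0.
  by rewrite mulr0; apply: Good0.
have hg := gU_comp esym hk0; rewrite -/K in hg.
set p := sz K k0 in hg; set q := (#|K| - p)%N in hg.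
have hp : (p <= #|K|)%N.
  by apply: subset_leq_card; apply/subsetP => z; rewrite inE => /andP[].
have hc : forall j, ccount e K j = ((j == p) + (j == q))%N.
  move=> j; apply: natr_inj_int; rewrite -coef_gU hg coefD !coefXn natrD.
  by [].
move/tsp_iff: htsp => hD.
have hD' : forall a b, (b <= a)%N -> (a + b)%N = #|K| -> (0 < b)%N ->
    (ccount e K a.+1 <= ccount e K a)%N.
  move=> a b hba hab hb; rewrite -!ccount_induced; apply: (hD a b) => //.
  by rewrite card_sig hab; apply: eq_card => z.
rewrite hg (_ : (n + #|K|)%N = (n + p + q)%N); last by lia.
apply: Good_pq => //.
case: (ltnP (q.+1) p) => h1.
  have := hD' p.-1 q.+1; rewrite !hc => H.
  have := H ltac:(lia) ltac:(lia) ltac:(lia); lia.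
case: (ltnP (p.+1) q) => h2.
  have := hD' q.-1 p.+1; rewrite !hc => H.
  have := H ltac:(lia) ltac:(lia) ltac:(lia); lia.
lia.
Qed.

Lemma closedU_sub (U : {set T}) y :
  (forall a b, a \in U -> e a b -> b \in U) -> y \in U -> comp e y \subset U.
Proof.
move=> hU hy; apply/subsetP => z; rewrite inE => hz.
have hcl : closed e (mem U).
  move=> a b hab; apply/idP/idP => [ha|hb]; first exact: hU ha hab.
  by apply: hU hb _; rewrite esym.
by rewrite -(closed_connect hcl hz).
Qed.

Lemma Good_ind (P : {set T} -> Prop) :
  (forall y, P (comp e y) -> two_s_positive (induced e (comp e y))) ->
  forall m (U : {set T}), (#|U| <= m)%N ->
  (forall y, y \in U -> P (comp e y)) ->
  (forall a b, a \in U -> e a b -> b \in U) ->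
  forall h n, Good h n -> Good (h * gU e U) (n + #|U|).
Proof.
move=> hP; elim=> [|m IH] U hm hU hcl h n hG.
  have -> : U = set0 by apply/eqP; rewrite -cards_eq0; lia.
  by rewrite gU0 mulr1 cards0 addn0.
case: (eqVneq U set0) => [->|hne].
  by rewrite gU0 mulr1 cards0 addn0.
case/set0Pn: hne => y hy.
set K := comp e y.
have hKU : K \subset U by apply: closedU_sub.
have hyK : y \in K by apply: comp0.
have hsplit : U = K :|: (U :\: K).
  apply/setP => z; rewrite in_setU in_setD; case: (boolP (z \in K)) => hz //=.
  exact: (subsetP hKU z hz).
have hdisj : [disjoint K & U :\: K].
  by rewrite disjoints_subset; apply/subsetP => z hz; rewrite in_setC in_setD hz.
have hne : forall a b, a \in K -> b \in U :\: K -> ~~ e a b.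
  move=> a b ha; rewrite in_setD => /andP[hb _]; apply/negP => hab.
  by rewrite (comp_closed ha hab) in hb.
have hcard : #|U| = (#|K| + #|U :\: K|)%N.
  by rewrite -(cardsID K U) (setIidPr hKU).
rewrite hsplit (gU_union esym hdisj hne) mulrA.
rewrite -hsplit hcard addnA.
apply: IH.
- have : (#|K| > 0)%N by apply/card_gt0P; exists y.
  by lia.
- by move=> z; rewrite in_setD => /andP[_ /hU].
- move=> a b; rewrite !in_setD => /andP[ha hau] hab; rewrite (hcl a b hau hab) andbT.
  by apply/negP => hb; rewrite (comp_closed' esym hb hab) in ha.
- by apply: Good_comp => //; apply: hP; apply: hU.
Qed.
End Main.

Unset Implicit Arguments.

Theorem mainTheorem14 (V : finType) (e : rel V) (alpha : V -> nat)
    (HF : forest e)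
    (Hnot : ~ two_s_positive (clan_rel e alpha))
    (C : {set clan_vertex alpha})
    (HC : is_component (clan_rel e alpha) C)
    (HCnot : ~ two_s_positive (induced (clan_rel e alpha) C))
    (Huniq : forall C' : {set clan_vertex alpha},
        is_component (clan_rel e alpha) C' -> C' != C ->
        two_s_positive (induced (clan_rel e alpha) C'))
    (r : nat) (Hr : (1 <= r)%N)
    (Hbip : bipartite_sizes (clan_rel e alpha) C r.+2 r) :
  no_isolated (clan_rel e alpha).
Proof.
case: HF => [[esym _] _].
have esym' : ssrbool.symmetric (clan_rel e alpha).
  move=> x y; rewrite /clan_rel [tag x == _]eq_sym [x == y]eq_sym.
  by rewrite esym.
set e' := clan_rel e alpha in esym' Hnot HC HCnot Huniq Hbip *.
move=> x; case: (pickP (e' x)) => [y hy|hiso]; first by exists y.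
exfalso; apply: Hnot.
have hiso' : forall y, ~~ e' x y by move=> y; rewrite hiso.
case: HC => x0 hC.
have hCc : comp e' x0 = C by rewrite hC.
case: Hbip => A [hAC hA hCA hbipA].
pose k0 : {ffun clan_vertex alpha -> bool} := [ffun y => y \in A].
have hk0 : colU e' C k0.
  apply: colUP => [y hy|y z hy hz hyz]; rewrite !ffunE.
    by apply/negbTE; apply/negP => /(subsetP hAC); apply/negP.
  exact: hbipA.
have hsz : sz C k0 = r.+2.
  rewrite -hA; apply: eq_card => y; rewrite !inE ffunE.
  by apply/andP/idP => [[]//|hy]; split => //; apply: (subsetP hAC).
have hCcard : #|C| = (r.+2 + r)%N.
  by rewrite -(cardsID A C) (setIidPr hAC) hA hCA.
have hgC : gU e' C = 'X^(r.+2) + 'X^r.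
  rewrite -hCc in hk0; have := gU_comp esym' hk0; rewrite hCc hsz hCcard.
  by rewrite addKn.
have hxC : x \notin C.
  apply/negP => hx.
  have hsub : C \subset [set x].
    apply/subsetP => z hz; rewrite -(comp_iso hiso') inE.
    rewrite -hCc !inE in hx hz.
    apply: connect_trans _ hz.
    by rewrite (sym_connect_sym esym').
  by have := subset_leq_card hsub; rewrite cards1 hCcard; lia.
set S := x |: C.
have gS : gU e' S = (1 + 'X) * ('X^(r.+2) + 'X^r).
  rewrite /S (gU_union esym') ?gU_iso // ?hgC //.
    by rewrite disjoints_subset sub1set in_setC.
  by move=> a b; rewrite inE => /eqP -> _; exact: hiso'.
have hSc : forall a b, a \in S -> e' a b -> b \in S.
  move=> a b; rewrite !inE => /orP[/eqP ->|ha] hab.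
    by rewrite (negbTE (hiso' b)) in hab.
  by rewrite -hCc in ha *; rewrite (comp_closed ha hab) orbT.
have gT : gU e' [set: clan_vertex alpha] = gU e' S * gU e' (~: S).
  rewrite -(setUCr S) (gU_union esym') //.
    by rewrite disjoints_subset setCK subxx.
  move=> a b ha; rewrite in_setC; apply: contraNN => hab.
  exact: hSc ha hab.
have hR : forall a b, a \in ~: S -> e' a b -> b \in ~: S.
  move=> a b; rewrite !in_setC => ha hab; apply/negP => hb.
  by case/negP: ha; apply: hSc hb _; rewrite esym'.
have hU : forall y, y \in ~: S -> comp e' y != C.
  move=> y hy; apply/negP => /eqP hyC.
  move: hy; rewrite in_setC /S => /negP; apply.
  by rewrite -hyC in_setU1 comp0 orbT.
have hG := @Good_ind _ e' esym' (fun K => K != C)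
  (fun y hy => Huniq (comp e' y) (ex_intro _ y erefl) hy) #|~: S| (~: S) (leqnn _)
  hU hR _ _ (Good_h0 r).
have hcardT : #|clan_vertex alpha| = (2 * r + 3 + #|~: S|)%N.
  rewrite -(cardsC S) /S cardsU1 hxC hCcard; lia.
rewrite -gS -gT -hcardT in hG.
apply/tsp_iff => a b hba hab hb.
rewrite !ccount_setT.
case: hG => _ _ /(_ a b hab hba).
by rewrite !coef_gU ler_nat.
Qed.
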